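(* For all integers $n\ge1$ and $p\ge0$, $$\mathcal{B}_{n,p}=\frac{2\,n!\,p!}{\pi e}\operatorname{Im}\int_0^{\pi}\left(\frac{\exp\big(\exp(e^{i\theta})\big)}{\big(\exp(e^{i\theta})-1\big)^{p}}-e\sum_{l=0}^{p-1}\frac{\big(\exp(e^{i\theta})-1\big)^{l-p}}{l!}\right)\sin(n\theta)\,d\theta,$$ where $\operatorname{Im}$ denotes the imaginary part.
   Context: For an integer $p\ge0$, the $p$-Bell numbers $\mathcal{B}_{n,p}$ are defined by $\sum_{n\ge0}\mathcal{B}_{n,p}\frac{z^n}{n!}=\sum_{n\ge0}\binom{n+p}{p}^{-1}\frac{(e^z-1)^n}{n!}$. *)

(* Defs.v *)
From Stdlib Require Import Reals Arith Factorial Binomial.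
From Coquelicot Require Import Coquelicot.
Open Scope R_scope.

(* The exponential generating function of the p-Bell numbers, as a real
   function of z:  sum_{k>=0} binom(k+p,p)^{-1} (e^z-1)^k / k!  *)
Definition pBell_egf (p : nat) (z : R) : R :=
  Series (fun k => (exp z - 1) ^ k / (INR (fact k) * Binomial.C (k + p) p)).

(* B_{n,p} = n! [z^n] EGF = n-th derivative of the EGF at 0. *)
Definition pBell (n p : nat) : R := Derive_n (pBell_egf p) n 0.

Definition Cexp (z : C) : C := (exp (Re z) * cos (Im z), exp (Re z) * sin (Im z)).

(* The integrand of Theorem 7 (complex-valued); negative powers u^(l-p) with
   l < p are written as 1/u^(p-l). *)
Definition thm7_integrand (n p : nat) (t : R) : C :=
  let w := Cexp (Cexp (Cexp ((0, t) : C))) in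
  let u := Cminus (Cexp (Cexp ((0, t) : C))) (RtoC 1) in
  Cmult
    (Cminus (Cdiv w (Cpow u p))
            (Cmult (RtoC (exp 1))
               (sum_n (fun l => if (l <? p)%nat
                                then Cdiv (RtoC 1) (Cmult (RtoC (INR (fact l))) (Cpow u (p - l)))
                                else RtoC 0) p)))
    (RtoC (sin (INR n * t))).

(* Main.v *)
Require Import Defs.
From Stdlib Require Import Reals Arith Factorial Lra Lia.
From Coquelicot Require Import Coquelicot.
Open Scope R_scope.

Lemma radius_inf (a : nat -> R) :
  (forall r, 0 < r -> CV_disk a r) -> forall t, Rbar_lt (Rabs t) (CV_radius a).
Proof.
  intros H t.
  assert (Hr : 0 < Rabs t + 1) by (generalize (Rabs_pos t); lra).
  set (r := mkposreal _ Hr).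
  assert (Hle : Rbar_le r (CV_radius a)).
  { apply CV_radius_Reals_1.
    pose proof (Series_correct _ (H r Hr)) as Hl.
    exists (fun n => Rabs (a n) * r ^ n).
    exists (Series (fun n : nat => Rabs (a n * r ^ n))). split.
    - apply is_series_Reals. 
      eapply is_series_ext; [|exact Hl]. intros n; simpl.
      rewrite !Rabs_mult, Rabs_Rabsolu; reflexivity.
    - intros n y Hy. unfold Boule in Hy. rewrite Rminus_0_r in Hy.
      rewrite Rabs_mult, <- RPow_abs. apply Rmult_le_compat_l. apply Rabs_pos.
      apply pow_incr. split. apply Rabs_pos. assert (E : pos r = Rabs t + 1) by reflexivity. lra. }
  destruct (CV_radius a) as [c| |]; simpl in *; try tauto. lra.
Qed.

Lemma ex_series_bound (a M : nat -> R) :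
  (forall k, Rabs (a k) <= M k) -> ex_series M -> ex_series a.
Proof. intros H HM. apply ex_series_Rabs.
  apply (ex_series_le (V:=R_CompleteNormedModule) _ M); auto.
  intros n. change (Rabs (Rabs (a n)) <= M n). rewrite Rabs_Rabsolu. apply H.
Qed.

Lemma tail_bound (a M : nat -> R) N :
  (forall k, Rabs (a k) <= M k) -> ex_series M ->
  Rabs (Series a - sum_n a N) <= Series M - sum_n M N.
Proof.
  intros H HM.
  assert (Ha : ex_series a) by (eapply ex_series_bound; eauto).
  rewrite (Series_incr_n a (S N)) by (lia || auto).
  rewrite (Series_incr_n M (S N)) by (lia || auto).
  rewrite !sum_n_Reals. simpl pred.
  replace (sum_f_R0 a N + Series (fun k => a (S N + k)%nat) - sum_f_R0 a N)
    with (Series (fun k => a (S N + k)%nat)) by ring.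
  replace (sum_f_R0 M N + Series (fun k => M (S N + k)%nat) - sum_f_R0 M N)
    with (Series (fun k => M (S N + k)%nat)) by ring.
  apply (ex_series_incr_n M (S N)) in HM.
  eapply Rle_trans. apply Series_Rabs.
  eapply ex_series_bound; [|exact HM]. intros k; rewrite Rabs_Rabsolu; auto.
  apply Series_le; auto. intros k; split; [apply Rabs_pos| auto].
Qed.

Lemma is_RInt_sum_n (f : nat -> R -> R) (I : nat -> R) a b N :
  (forall k, is_RInt (f k) a b (I k)) ->
  is_RInt (fun x => sum_n (fun k => f k x) N) a b (sum_n I N).
Proof.
  intros H. induction N.
  - rewrite sum_O. eapply is_RInt_ext; [|apply (H 0%nat)]. intros; rewrite sum_O; auto.
  - rewrite sum_Sn. eapply is_RInt_ext; [|apply (is_RInt_plus (V:=R_NormedModule)); [apply IHN|apply (H (S N))]].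
    intros; simpl. rewrite sum_Sn. reflexivity.
Qed.

Lemma SW (f : nat -> R -> R) (I M : nat -> R) a b :
  (forall k, is_RInt (f k) a b (I k)) -> (forall k x, Rabs (f k x) <= M k) -> ex_series M ->
  exists If, is_series I If /\ is_RInt (fun x => Series (fun k => f k x)) a b If.
Proof.
  intros HI HB HM.
  destruct (filterlim_RInt (U:=nat) (V:=R_CompleteNormedModule)
     (fun N x => sum_n (fun k => f k x) N) a b eventually _
     (fun x => Series (fun k => f k x)) (sum_n I)) as [If [H1 H2]].
  - intros N. apply is_RInt_sum_n; auto.
  - intros P [eps HP].
    pose proof (Series_correct _ HM) as HMs.
    destruct (proj1 (filterlim_locally_ball_norm (K:=R_AbsRing) (sum_n M) (Series M)) HMs eps) as [N0 HN0].
    exists N0. intros N HN. apply HP. intros t.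
    specialize (HN0 N HN).
    pose proof (tail_bound (fun k => f k t) M N (fun k => HB k t) HM) as T.
    change (Rabs (sum_n (fun k => f k t) N - Series (fun k => f k t)) < eps).
    unfold ball_norm in HN0. change (Rabs (sum_n M N - Series M) < eps) in HN0.
    rewrite Rabs_minus_sym. eapply Rle_lt_trans. apply T.
    rewrite Rabs_minus_sym in HN0. eapply Rle_lt_trans; [apply Rle_abs|exact HN0].
  - exists If; split; auto.
Qed.

Lemma is_RInt_val {V : NormedModule R_AbsRing} (f : R -> V) a b l l' :
  l = l' -> is_RInt f a b l -> is_RInt f a b l'.
Proof. intros ->; auto. Qed.

Lemma sin_intPI (z : Z) : sin (IZR z * PI) = 0.
Proof. apply sin_eq_0_1. exists z; auto. Qed.

Lemma cont_sinsin (m n : nat) x : continuous (fun t => sin (INR m * t) * sin (INR n * t)) x.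
Proof. apply (ex_derive_continuous (K:=R_AbsRing) (V:=R_NormedModule)). auto_derive. auto. Qed.

Lemma orth (m n : nat) : (1 <= n)%nat ->
  is_RInt (fun t => sin (INR m * t) * sin (INR n * t)) 0 PI (if Nat.eqb m n then PI/2 else 0).
Proof.
  intros Hn. assert (HnR : INR n <> 0) by (apply not_0_INR; lia).
  destruct (Nat.eqb_spec m n) as [E|E].
  - subst m.
    set (F := fun t => t / 2 - sin (2 * INR n * t) / (4 * INR n)).
    assert (H := is_RInt_derive (V:=R_CompleteNormedModule) F (fun t => sin (INR n * t) * sin (INR n * t)) 0 PI).
    eapply is_RInt_val; [|apply H].
    + unfold F, minus, plus, opp; simpl.
      replace (2 * INR n * PI) with (IZR (2 * Z.of_nat n) * PI).
      rewrite sin_intPI. rewrite Rmult_0_r, sin_0. field. auto.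
      rewrite mult_IZR, <- INR_IZR_INZ. ring.
    + intros x _. unfold F. auto_derive. auto.
      replace (2 * INR n * x) with (INR n * x + INR n * x) by ring.
      rewrite cos_plus. pose proof (sin2_cos2 (INR n * x)) as S2. unfold Rsqr in S2.
      transitivity ((1 - (cos (INR n * x) * cos (INR n * x) - sin (INR n * x) * sin (INR n * x)))/2).
      field; auto. lra.
    + intros x _. apply cont_sinsin.
  - set (F := fun t => sin ((INR m - INR n) * t) / (2 * (INR m - INR n))
                    - sin ((INR m + INR n) * t) / (2 * (INR m + INR n))).
    assert (Hd : INR m - INR n <> 0).
    { intros C. apply E. apply INR_eq. lra. }
    assert (Hs : INR m + INR n <> 0).
    { assert (0 < INR n) by (apply lt_0_INR; lia). generalize (pos_INR m); lra. }
    assert (H := is_RInt_derive (V:=R_CompleteNormedModule) F (fun t => sin (INR m * t) * sin (INR n * t)) 0 PI).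
    eapply is_RInt_val; [|apply H].
    + unfold F, minus, plus, opp; simpl.
      replace ((INR m - INR n) * PI) with (IZR (Z.of_nat m - Z.of_nat n) * PI).
      replace ((INR m + INR n) * PI) with (IZR (Z.of_nat m + Z.of_nat n) * PI).
      rewrite !sin_intPI. rewrite !Rmult_0_r, sin_0. field. auto.
      rewrite plus_IZR, <- !INR_IZR_INZ. ring.
      rewrite minus_IZR, <- !INR_IZR_INZ. ring.
    + intros x _. unfold F. auto_derive. auto.
      replace ((INR m - INR n) * x) with (INR m * x - INR n * x) by ring.
      replace ((INR m + INR n) * x) with (INR m * x + INR n * x) by ring.
      rewrite cos_plus, cos_minus. field. split; auto.
    + intros x _. apply cont_sinsin.
Qed.

Lemma exp_series_ex (x : R) : ex_series (fun k => x ^ k / INR (fact k)).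
Proof.
  eexists. eapply is_series_ext; [|apply (is_exp_Reals x)].
  intros n. simpl. rewrite pow_n_pow. unfold scal; simpl. unfold mult; simpl. unfold Rdiv. ring.
Qed.

Lemma im_le_Cmod (c : C) : Rabs (Im c) <= Cmod c.
Proof.
  unfold Cmod. rewrite <- sqrt_Rsqr_abs. apply sqrt_le_1_alt. unfold Rsqr.
  destruct c; simpl. nra.
Qed.

Definition aRe (z : C) m := Re (Cpow z m) / INR (fact m).
Definition aIm (z : C) m := Im (Cpow z m) / INR (fact m).

Lemma fact_pos m : 0 < INR (fact m).
Proof. apply lt_0_INR. apply lt_O_fact. Qed.

Lemma radius_aRe z t : Rbar_lt (Rabs t) (CV_radius (aRe z)).
Proof.
  apply radius_inf. intros r Hr. unfold CV_disk.
  apply (ex_series_bound _ (fun k => (Cmod z * r) ^ k / INR (fact k))).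
  2: apply exp_series_ex.
  intros k. rewrite Rabs_Rabsolu. unfold aRe. rewrite Rabs_mult. unfold Rdiv.
  rewrite Rabs_mult, Rpow_mult_distr, <- RPow_abs, (Rabs_pos_eq r) by lra.
  rewrite (Rabs_pos_eq (/ _)) by (left; apply Rinv_0_lt_compat, fact_pos).
  rewrite <- Cmod_pow. pose proof (re_le_Cmod (Cpow z k)).
  assert (0 <= r ^ k) by (apply pow_le; lra).
  assert (0 < / INR (fact k)) by (apply Rinv_0_lt_compat, fact_pos).
  apply Rle_trans with (Cmod (Cpow z k) * / INR (fact k) * r ^ k). 
  apply Rmult_le_compat_r; auto. apply Rmult_le_compat_r; lra. lra.
Qed.

Lemma radius_aIm z t : Rbar_lt (Rabs t) (CV_radius (aIm z)).
Proof.
  apply radius_inf. intros r Hr. unfold CV_disk.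
  apply (ex_series_bound _ (fun k => (Cmod z * r) ^ k / INR (fact k))).
  2: apply exp_series_ex.
  intros k. rewrite Rabs_Rabsolu. unfold aIm. rewrite Rabs_mult. unfold Rdiv.
  rewrite Rabs_mult, Rpow_mult_distr, <- RPow_abs, (Rabs_pos_eq r) by lra.
  rewrite (Rabs_pos_eq (/ _)) by (left; apply Rinv_0_lt_compat, fact_pos).
  rewrite <- Cmod_pow. pose proof (im_le_Cmod (Cpow z k)).
  assert (0 <= r ^ k) by (apply pow_le; lra).
  assert (0 < / INR (fact k)) by (apply Rinv_0_lt_compat, fact_pos).
  apply Rle_trans with (Cmod (Cpow z k) * / INR (fact k) * r ^ k). 
  apply Rmult_le_compat_r; auto. apply Rmult_le_compat_r; lra. lra.
Qed.

Lemma ex_pseries_series (a : nat -> R) x : ex_pseries a x -> ex_series (fun k => a k * x ^ k).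
Proof. intros H. eapply ex_series_ext; [|exact H]. intros n. simpl.
  rewrite pow_n_pow. unfold scal; simpl; unfold mult; simpl. ring. Qed.

Lemma PSeries_lin (a1 a2 : nat -> R) c1 c2 x :
  ex_pseries a1 x -> ex_pseries a2 x ->
  PSeries (fun m => c1 * a1 m + c2 * a2 m) x = c1 * PSeries a1 x + c2 * PSeries a2 x.
Proof.
  intros H1 H2. apply ex_pseries_series in H1. apply ex_pseries_series in H2.
  unfold PSeries. rewrite <- !Series_scal_l. rewrite <- Series_plus.
  apply Series_ext. intros; ring.
  exact (ex_series_scal_l (K:=R_AbsRing) (V:=R_NormedModule) c1 _ H1).
  exact (ex_series_scal_l (K:=R_AbsRing) (V:=R_NormedModule) c2 _ H2).
Qed.

Lemma PSder_Re z m : PS_derive (aRe z) m = Re z * aRe z m - Im z * aIm z m.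
Proof.
  unfold PS_derive, aRe, aIm. simpl Cpow. change (fact (S m)) with (S m * fact m)%nat. rewrite mult_INR.
  pose proof (fact_pos m). assert (INR (S m) <> 0) by (apply not_0_INR; lia).
  destruct z as [a b]. destruct (Cpow (a,b) m) as [c d]. cbn -[INR fact]. field. split; lra.
Qed.

Lemma PSder_Im z m : PS_derive (aIm z) m = Im z * aRe z m + Re z * aIm z m.
Proof.
  unfold PS_derive, aRe, aIm. simpl Cpow. change (fact (S m)) with (S m * fact m)%nat. rewrite mult_INR.
  pose proof (fact_pos m). assert (INR (S m) <> 0) by (apply not_0_INR; lia).
  destruct z as [a b]. destruct (Cpow (a,b) m) as [c d]. cbn -[INR fact]. field. split; lra.
Qed.

Lemma P1 z : is_series (aRe z) (Re (Cexp z)) /\ is_series (aIm z) (Im (Cexp z)).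
Proof.
  set (X := PSeries (aRe z)). set (Y := PSeries (aIm z)).
  set (a := Re z). set (b := Im z).
  assert (DX : forall t, is_derive X t (a * X t - b * Y t)).
  { intros t. assert (H := is_derive_PSeries (aRe z) t (radius_aRe z t)).
    replace (a * X t - b * Y t) with (PSeries (PS_derive (aRe z)) t). exact H.
    rewrite (PSeries_ext _ (fun m => a * aRe z m + (- b) * aIm z m)).
    rewrite PSeries_lin. unfold X, Y; ring.
    apply CV_radius_inside, radius_aRe. apply CV_radius_inside, radius_aIm.
    intros m; rewrite PSder_Re. unfold a, b; ring. }
  assert (DY : forall t, is_derive Y t (b * X t + a * Y t)).
  { intros t. assert (H := is_derive_PSeries (aIm z) t (radius_aIm z t)).
    replace (b * X t + a * Y t) with (PSeries (PS_derive (aIm z)) t). exact H.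
    rewrite (PSeries_ext _ (fun m => b * aRe z m + a * aIm z m)).
    rewrite PSeries_lin. unfold X, Y; ring.
    apply CV_radius_inside, radius_aRe. apply CV_radius_inside, radius_aIm.
    intros m; rewrite PSder_Im. unfold a, b; ring. }
  set (g := fun t => exp (- a * t) * (X t * cos (b * t) + Y t * sin (b * t))).
  set (h := fun t => exp (- a * t) * (Y t * cos (b * t) - X t * sin (b * t))).
  assert (Dg : forall t, is_derive g t 0).
  { intros t. unfold g. 
    evar (e : R). assert (HH : is_derive (fun t => exp (- a * t) * (X t * cos (b * t) + Y t * sin (b * t))) t e).
    { apply (is_derive_mult (fun t => exp (- a * t))). auto_derive; auto.
      apply (is_derive_plus (fun t => X t * cos (b * t))).
      apply (is_derive_mult X). apply DX. auto_derive; auto. intros; apply Rmult_comm.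
      apply (is_derive_mult Y). apply DY. auto_derive; auto. intros; apply Rmult_comm.
      intros; apply Rmult_comm. }
    replace 0 with e. exact HH. unfold e. unfold plus, scal, mult; simpl. unfold mult; simpl. ring. }
  assert (Dh : forall t, is_derive h t 0).
  { intros t. unfold h. 
    evar (e : R). assert (HH : is_derive (fun t => exp (- a * t) * (Y t * cos (b * t) - X t * sin (b * t))) t e).
    { apply (is_derive_mult (fun t => exp (- a * t))). auto_derive; auto.
      apply (is_derive_minus (fun t => Y t * cos (b * t))).
      apply (is_derive_mult Y). apply DY. auto_derive; auto. intros; apply Rmult_comm.
      apply (is_derive_mult X). apply DX. auto_derive; auto. intros; apply Rmult_comm.
      intros; apply Rmult_comm. }
    replace 0 with e. exact HH. unfold e. unfold minus, plus, opp, scal, mult; simpl. unfold mult; simpl. ring. }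
  assert (G01 : g 0 = g 1) by (apply eq_is_derive; [intros; apply Dg | lra]).
  assert (H01 : h 0 = h 1) by (apply eq_is_derive; [intros; apply Dh | lra]).
  assert (X0 : X 0 = 1).
  { unfold X. rewrite PSeries_0. unfold aRe. simpl. field. }
  assert (Y0 : Y 0 = 0).
  { unfold Y. rewrite PSeries_0. unfold aIm. simpl. field. }
  unfold g, h in G01, H01. rewrite X0, Y0 in G01, H01.
  rewrite !Rmult_0_r, exp_0, cos_0, sin_0 in G01, H01.
  rewrite !Rmult_1_r in G01, H01.
  assert (E1 : exp (- a) * exp a = 1) by (rewrite <- exp_plus; replace (-a + a) with 0 by ring; apply exp_0).
  pose proof (sin2_cos2 b) as S2; unfold Rsqr in S2.
  assert (EX : X 1 = exp a * cos b).
  { assert (A1 : X 1 * cos b + Y 1 * sin b = exp a).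
    { apply (Rmult_eq_reg_l (exp (-a))). rewrite E1. lra.
      apply Rgt_not_eq, exp_pos. }
    assert (A2 : Y 1 * cos b - X 1 * sin b = 0).
    { apply (Rmult_eq_reg_l (exp (-a))). lra. apply Rgt_not_eq, exp_pos. }
    transitivity (cos b * (X 1 * cos b + Y 1 * sin b) - sin b * (Y 1 * cos b - X 1 * sin b)).
    transitivity (X 1 * (sin b * sin b + cos b * cos b)). rewrite S2; ring. ring. rewrite A1, A2. ring. }
  assert (EY : Y 1 = exp a * sin b).
  { assert (A1 : X 1 * cos b + Y 1 * sin b = exp a).
    { apply (Rmult_eq_reg_l (exp (-a))). rewrite E1. lra.
      apply Rgt_not_eq, exp_pos. }
    assert (A2 : Y 1 * cos b - X 1 * sin b = 0).
    { apply (Rmult_eq_reg_l (exp (-a))). lra. apply Rgt_not_eq, exp_pos. }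
    transitivity (sin b * (X 1 * cos b + Y 1 * sin b) + cos b * (Y 1 * cos b - X 1 * sin b)).
    transitivity (Y 1 * (sin b * sin b + cos b * cos b)). rewrite S2; ring. ring. rewrite A1, A2. ring. }
  split.
  - replace (Re (Cexp z)) with (X 1) by (rewrite EX; reflexivity).
    pose proof (Series_correct _ (ex_pseries_series _ _ (CV_radius_inside _ _ (radius_aRe z 1)))) as HS.
    eapply is_series_ext; [|exact HS]. intros n; simpl. rewrite pow1; ring.
  - replace (Im (Cexp z)) with (Y 1) by (rewrite EY; reflexivity).
    pose proof (Series_correct _ (ex_pseries_series _ _ (CV_radius_inside _ _ (radius_aIm z 1)))) as HS.
    eapply is_series_ext; [|exact HS]. intros n; simpl. rewrite pow1; ring.
Qed.

Lemma deMoivre r th m :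
  Cpow (r * cos th, r * sin th) m = (r ^ m * cos (INR m * th), r ^ m * sin (INR m * th)).
Proof.
  induction m.
  - simpl. rewrite Rmult_0_l, cos_0, sin_0. unfold RtoC. f_equal; ring.
  - change (Cpow (r * cos th, r * sin th) (S m)) with (Cmult (r * cos th, r * sin th) (Cpow (r * cos th, r * sin th) m)).
    rewrite IHm. rewrite S_INR. 
    replace ((INR m + 1) * th) with (th + INR m * th) by ring.
    rewrite cos_plus, sin_plus. unfold Cmult; simpl. f_equal; ring.
Qed.

Lemma sum_bump n v N :
  sum_f_R0 (fun m => if Nat.eqb m n then v else 0) N = if Nat.leb n N then v else 0.
Proof.
  induction N.
  - simpl. destruct n; simpl; auto.
  - rewrite tech5, IHN.
    destruct (Nat.eqb_spec (S N) n); destruct (Nat.leb_spec n N); destruct (Nat.leb_spec n (S N));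
      try lia; lra.
Qed.

Lemma is_series_bump n v : is_series (fun m => if Nat.eqb m n then v else 0) v.
Proof.
  apply is_series_Reals. intros eps Heps. exists n. intros N HN.
  rewrite sum_bump. destruct (Nat.leb_spec n N); try lia. unfold R_dist.
  rewrite Rminus_eq_0, Rabs_R0; auto.
Qed.

Definition EI (j : nat) (t : R) := exp (INR j * cos t) * sin (INR j * sin t).
Definition ER (j : nat) (t : R) := exp (INR j * cos t) * cos (INR j * sin t).

Lemma EI_series j t : is_series (fun m => INR j ^ m / INR (fact m) * sin (INR m * t)) (EI j t).
Proof.
  destruct (P1 (INR j * cos t, INR j * sin t)) as [_ H].
  eapply is_series_ext; [|exact H]. intros m. unfold aIm. rewrite deMoivre. simpl. field.
  apply Rgt_not_eq, fact_pos.
Qed.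

Lemma lemmaE (j n : nat) : (1 <= n)%nat ->
  is_RInt (fun t => EI j t * sin (INR n * t)) 0 PI (PI / 2 * (INR j ^ n / INR (fact n))).
Proof.
  intros Hn.
  destruct (SW (fun m t => INR j ^ m / INR (fact m) * (sin (INR m * t) * sin (INR n * t)))
               (fun m => INR j ^ m / INR (fact m) * (if Nat.eqb m n then PI / 2 else 0))
               (fun m => INR j ^ m / INR (fact m)) 0 PI) as [If [H1 H2]].
  - intros m. apply (is_RInt_scal (V:=R_NormedModule)). apply orth; auto.
  - intros m t. rewrite Rabs_mult. rewrite Rabs_pos_eq.
    2: { apply Rmult_le_pos. apply pow_le, pos_INR. left; apply Rinv_0_lt_compat, fact_pos. }
    rewrite <- (Rmult_1_r (INR j ^ m / INR (fact m))) at 2.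
    apply Rmult_le_compat_l.
    { apply Rmult_le_pos. apply pow_le, pos_INR. left; apply Rinv_0_lt_compat, fact_pos. }
    rewrite Rabs_mult. pose proof (Rabs_pos (sin (INR m * t))). pose proof (Rabs_pos (sin (INR n * t))).
    pose proof (SIN_bound (INR m * t)) as [? ?]. pose proof (SIN_bound (INR n * t)) as [? ?].
    assert (Rabs (sin (INR m * t)) <= 1) by (apply Rabs_le; lra).
    assert (Rabs (sin (INR n * t)) <= 1) by (apply Rabs_le; lra).
    nra.
  - apply exp_series_ex.
  - assert (HIf : If = PI / 2 * (INR j ^ n / INR (fact n))).
    { apply is_series_unique in H1. rewrite <- H1. apply is_series_unique.
      eapply is_series_ext; [|apply (is_series_bump n)].
      intros m. simpl. destruct (Nat.eqb_spec m n). subst; ring. ring. }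
    rewrite <- HIf. eapply is_RInt_ext; [|exact H2].
    intros t _. simpl. apply is_series_unique.
    eapply is_series_ext; [|apply (is_series_scal_r (sin (INR n * t)) _ _ (EI_series j t))].
    intros m; simpl. ring.
Qed.

Fixpoint beta (k j : nat) : R :=
  match k with
  | O => if Nat.eqb j 0 then 1 else 0
  | S k' => (match j with O => 0 | S j' => beta k' j' end) - beta k' j
  end.

Lemma beta_big k j : (k < j)%nat -> beta k j = 0.
Proof.
  revert j; induction k; intros j Hj; simpl.
  - destruct (Nat.eqb_spec j 0); [lia|auto].
  - destruct j; [lia|]. rewrite !IHk by lia. ring.
Qed.

Lemma csum_front (a : nat -> C) k : sum_n a (S k) = (a 0%nat + sum_n (fun j => a (S j)) k)%C.
Proof. unfold sum_n. rewrite sum_Sn_m by lia. rewrite <- sum_n_m_S. reflexivity. Qed.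

Lemma csum_minus (a b : nat -> C) k : sum_n (fun j => a j - b j)%C k = (sum_n a k - sum_n b k)%C.
Proof. induction k. rewrite !sum_O. auto. rewrite !sum_Sn, IHk. unfold plus; simpl. ring. Qed.

Lemma csum_mult_l (c : C) (a : nat -> C) k : sum_n (fun j => c * a j)%C k = (c * sum_n a k)%C.
Proof. induction k. rewrite !sum_O. auto. rewrite !sum_Sn, IHk. unfold plus; simpl. ring. Qed.

Lemma cbinom (V : C) k : Cpow (V - 1) k = sum_n (fun j => RtoC (beta k j) * Cpow V j)%C k.
Proof.
  induction k.
  - rewrite sum_O. simpl. ring.
  - change (Cpow (V - 1) (S k)) with ((V - 1) * Cpow (V - 1) k)%C. rewrite IHk.
    rewrite (sum_n_ext (fun j => RtoC (beta (S k) j) * Cpow V j)%C (fun j => RtoC (match j with O => 0 | S j' => beta k j' end) * Cpow V j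
                             - RtoC (beta k j) * Cpow V j)%C).
    2: { intros j. simpl beta. rewrite RtoC_minus. match goal with |- ?a = ?b => change (@eq C a b) end. ring. }
    rewrite csum_minus, csum_front, sum_Sn. rewrite (beta_big k (S k)) by lia.
    rewrite (sum_n_ext (fun j => RtoC (match S j with O => 0 | S j' => beta k j' end) * Cpow V (S j))%C
              (fun j => V * (RtoC (beta k j) * Cpow V j))%C).
    2: { intros j. simpl. ring. }
    rewrite csum_mult_l. unfold plus; simpl. ring.
Qed.

Fixpoint rps (f : nat -> R) (p : nat) : R :=
  match p with O => 0 | S q => rps f q + f q end.
Fixpoint cps (f : nat -> C) (p : nat) : C :=
  match p with O => RtoC 0 | S q => Cplus (cps f q) (f q) end.

Ltac toR := match goal with |- ?a = ?b => change (@eq R a b) end.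

Lemma is_series_val (a : nat -> R) (l l' : R) : l = l' -> is_series a l -> is_series a l'.
Proof. intros ->; auto. Qed.

Lemma series_shift (a : nat -> R) l p :
  is_series a l -> is_series (fun k => a (p + k)%nat) (l - rps a p).
Proof.
  intros H. induction p.
  - simpl. rewrite Rminus_0_r. exact H.
  - set (b := fun k => a (p + k)%nat).
    assert (Hb : is_series (fun k => b (S k)) (l - rps a p - a p)).
    { apply is_series_incr_1. unfold b. rewrite Nat.add_0_r.
      eapply is_series_val; [|exact IHp]. unfold plus; simpl; ring. }
    simpl. assert (E : l - (rps a p + a p) = l - rps a p - a p) by ring. rewrite E.
    eapply is_series_ext; [|exact Hb].
    intros k; unfold b. f_equal. lia.
Qed.

Lemma Re_cps f p : Re (cps f p) = rps (fun l => Re (f l)) p.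
Proof. induction p; simpl; auto. rewrite <- IHp. reflexivity. Qed.
Lemma Im_cps f p : Im (cps f p) = rps (fun l => Im (f l)) p.
Proof. induction p; simpl; auto. rewrite <- IHp. reflexivity. Qed.

Lemma guarded_sum (f : nat -> C) p N :
  sum_n (fun l => if (l <? p)%nat then f l else RtoC 0) N = cps f (Nat.min p (S N)).
Proof.
  induction N.
  - rewrite sum_O. destruct p; simpl. auto. replace (Nat.min p 0) with 0%nat by lia. simpl. symmetry; apply Cplus_0_l.
  - rewrite sum_Sn, IHN. destruct (Nat.ltb_spec (S N) p).
    + replace (Nat.min p (S (S N))) with (S (Nat.min p (S N))) by lia.
      replace (Nat.min p (S N)) with (S N) by lia. simpl. reflexivity.
    + replace (Nat.min p (S (S N))) with (Nat.min p (S N)) by lia.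
      unfold plus; simpl. apply Cplus_0_r.
Qed.

Lemma Cexp_shift (V : C) : Cexp V = (RtoC (exp 1) * Cexp (V - 1))%C.
Proof.
  destruct V as [a b]. unfold Cexp. simpl.
  replace (b + - 0) with b by ring. replace (a + - (1)) with (a - 1) by ring.
  assert (E : exp a = exp 1 * exp (a - 1)) by (rewrite <- exp_plus; f_equal; ring).
  rewrite E. unfold Cmult, RtoC; simpl. f_equal; ring.
Qed.

Lemma abs_Re_pow_bound (u : C) k p : Rabs (Re (Cpow u k) / INR (fact (k + p))) <= Cmod u ^ k / INR (fact k).
Proof.
  unfold Rdiv. rewrite Rabs_mult. rewrite (Rabs_pos_eq (/ INR (fact (k + p)))) by (left; apply Rinv_0_lt_compat, fact_pos).
  apply Rmult_le_compat. apply Rabs_pos. left; apply Rinv_0_lt_compat, fact_pos.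
  rewrite <- Cmod_pow. apply re_le_Cmod.
  apply Rinv_le_contravar. apply fact_pos. apply le_INR, fact_le. lia.
Qed.

Lemma abs_Im_pow_bound (u : C) k p : Rabs (Im (Cpow u k) / INR (fact (k + p))) <= Cmod u ^ k / INR (fact k).
Proof.
  unfold Rdiv. rewrite Rabs_mult. rewrite (Rabs_pos_eq (/ INR (fact (k + p)))) by (left; apply Rinv_0_lt_compat, fact_pos).
  apply Rmult_le_compat. apply Rabs_pos. left; apply Rinv_0_lt_compat, fact_pos.
  rewrite <- Cmod_pow. apply im_le_Cmod.
  apply Rinv_le_contravar. apply fact_pos. apply le_INR, fact_le. lia.
Qed.

Lemma fact_nz_C l : RtoC (INR (fact l)) <> 0%C.
Proof. intros H. apply RtoC_inj in H. pose proof (fact_pos l). lra. Qed.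

Lemma Re_Cmult (a b : C) : Re (a * b)%C = Re a * Re b - Im a * Im b.
Proof. destruct a, b; simpl; ring. Qed.
Lemma Im_Cmult (a b : C) : Im (a * b)%C = Re a * Im b + Im a * Re b.
Proof. destruct a, b; simpl; ring. Qed.

Lemma exA u p : ex_series (fun k => Re (Cpow u k) / INR (fact (k + p))).
Proof. apply (ex_series_bound _ (fun k => Cmod u ^ k / INR (fact k))).
  intros; apply abs_Re_pow_bound. apply exp_series_ex. Qed.
Lemma exB u p : ex_series (fun k => Im (Cpow u k) / INR (fact (k + p))).
Proof. apply (ex_series_bound _ (fun k => Cmod u ^ k / INR (fact k))).
  intros; apply abs_Im_pow_bound. apply exp_series_ex. Qed.

Lemma ex_series_scal_R (c : R) (a : nat -> R) : ex_series a -> ex_series (fun n => c * a n).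
Proof. intros H. exact (ex_series_scal_l (K:=R_AbsRing) (V:=R_NormedModule) c _ H). Qed.

Lemma C_eq (a b : C) : Re a = Re b -> Im a = Im b -> a = b.
Proof. destruct a, b; simpl; intros -> ->; auto. Qed.

Lemma Re_minus (a b : C) : Re (a - b)%C = Re a - Re b.
Proof. destruct a, b; simpl; ring. Qed.
Lemma Im_minus (a b : C) : Im (a - b)%C = Im a - Im b.
Proof. destruct a, b; simpl; ring. Qed.
Lemma rps_ext f g p : (forall l, f l = g l) -> rps f p = rps g p.
Proof. intros H; induction p; simpl; auto. rewrite IHp, H; auto. Qed.

Lemma Q (V : C) p : (V - RtoC 1)%C <> 0%C ->
  (Cdiv (Cexp V) (Cpow (V - RtoC 1) p) - RtoC (exp 1) *
     sum_n (fun l => if (l <? p)%nat then Cdiv (RtoC 1) (Cmult (RtoC (INR (fact l))) (Cpow (V - RtoC 1) (p - l))) else RtoC 0) p)%C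
  = Cmult (RtoC (exp 1)) (Series (fun k => Re (Cpow (V - RtoC 1) k) / INR (fact (k + p))),
                      Series (fun k => Im (Cpow (V - RtoC 1) k) / INR (fact (k + p)))).
Proof.
  intros Hu. set (u := (V - RtoC 1)%C) in *.
  set (P := Cpow u p). assert (HP : P <> 0%C) by (apply Cpow_nz; auto).
  set (A := Series (fun k => Re (Cpow u k) / INR (fact (k + p)))).
  set (B := Series (fun k => Im (Cpow u k) / INR (fact (k + p)))).
  set (T := cps (fun l => RtoC (/ INR (fact l)) * Cpow u l)%C p).
  assert (KRe : Re P * A - Im P * B = Re (Cexp u) - rps (aRe u) p).
  { unfold A, B. rewrite <- !Series_scal_l, <- Series_minus.
    2: apply ex_series_scal_R, exA. 2: apply ex_series_scal_R, exB.
    apply is_series_unique. eapply is_series_ext; [|apply (series_shift _ _ p (proj1 (P1 u)))].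
    intros k. unfold aRe. rewrite Cpow_add_r. fold P. rewrite Re_Cmult, (Nat.add_comm p k). toR. field.
    apply Rgt_not_eq, fact_pos. }
  assert (KIm : Re P * B + Im P * A = Im (Cexp u) - rps (aIm u) p).
  { unfold A, B. rewrite <- !Series_scal_l, <- Series_plus.
    2: apply ex_series_scal_R, exB. 2: apply ex_series_scal_R, exA.
    apply is_series_unique. eapply is_series_ext; [|apply (series_shift _ _ p (proj2 (P1 u)))].
    intros k. unfold aIm. rewrite Cpow_add_r. fold P. rewrite Im_Cmult, (Nat.add_comm p k). toR. field.
    apply Rgt_not_eq, fact_pos. }
  assert (KAB : (P * (A, B))%C = (Cexp u - T)%C).
  { apply C_eq.
    - rewrite Re_Cmult. change (Re (A, B)) with A. change (Im (A, B)) with B.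
      rewrite KRe, Re_minus. unfold T. rewrite Re_cps. f_equal. apply rps_ext.
      intros l. rewrite re_scal_l. unfold aRe. field. apply Rgt_not_eq, fact_pos.
    - rewrite Im_Cmult. change (Re (A, B)) with A. change (Im (A, B)) with B.
      rewrite KIm, Im_minus. unfold T. rewrite Im_cps. f_equal. apply rps_ext.
      intros l. rewrite im_scal_l. unfold aIm. field. apply Rgt_not_eq, fact_pos. }
  assert (KG : sum_n (fun l => if (l <? p)%nat then Cdiv (RtoC 1) (Cmult (RtoC (INR (fact l))) (Cpow u (p - l))) else RtoC 0) p
               = cps (fun l => Cdiv (RtoC 1) (Cmult (RtoC (INR (fact l))) (Cpow u (p - l)))) p).
  { rewrite guarded_sum. f_equal. lia. }
  assert (PG : forall q, (q <= p)%nat ->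
     (P * cps (fun l => Cdiv (RtoC 1) (Cmult (RtoC (INR (fact l))) (Cpow u (p - l)))) q)%C
     = cps (fun l => RtoC (/ INR (fact l)) * Cpow u l)%C q).
  { induction q; intros Hq.
    - cbn [cps]. apply Cmult_0_r.
    - cbn [cps]. rewrite <- IHq by lia. 
      assert (EP : P = (Cpow u q * Cpow u (p - q))%C).
      { unfold P. rewrite <- Cpow_add_r. f_equal. lia. }
      assert (H1 : Cpow u (p - q) <> 0%C) by (apply Cpow_nz; auto).
      assert (H2 : RtoC (INR (fact q)) <> 0%C).
      { intros H. injection H. pose proof (fact_pos q). lra. }
      rewrite RtoC_inv by (apply Rgt_not_eq, fact_pos).
      rewrite EP. field. split; auto. }
  rewrite KG. rewrite Cexp_shift. fold u.
  assert (HAB : @eq C (A, B) ((Cexp u - T) / P)%C).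
  { rewrite <- KAB. unfold Cdiv. rewrite (Cmult_comm P), <- Cmult_assoc, Cinv_r, Cmult_1_r; auto. }
  assert (HG : cps (fun l => Cdiv (RtoC 1) (Cmult (RtoC (INR (fact l))) (Cpow u (p - l)))) p = (T / P)%C).
  { unfold T. rewrite <- (PG p) by lia. field. auto. }
  rewrite HAB, HG. field. auto.
Qed.

Definition Vt (t : R) : C := Cexp (Cexp ((0, t) : C)).

Lemma exp_pow_INR x j : exp x ^ j = exp (INR j * x).
Proof. induction j. simpl. rewrite Rmult_0_l, exp_0; auto.
  simpl pow. rewrite IHj, S_INR, <- exp_plus. f_equal; ring. Qed.

Lemma Vt_eq t : Vt t = (exp (cos t) * cos (sin t), exp (cos t) * sin (sin t)).
Proof. unfold Vt, Cexp. simpl. rewrite exp_0, !Rmult_1_l. reflexivity. Qed.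

Lemma Vt_pow t j : Cpow (Vt t) j = (ER j t, EI j t).
Proof. rewrite Vt_eq, deMoivre, exp_pow_INR. reflexivity. Qed.

Lemma Vt_ne1 t : (Vt t - RtoC 1)%C <> 0%C.
Proof.
  intros H. assert (HR := f_equal Re H). assert (HI := f_equal Im H).
  rewrite Re_minus, Vt_eq in HR. rewrite Im_minus, Vt_eq in HI. simpl in HR, HI.
  assert (Hs : sin (sin t) = 0).
  { pose proof (exp_pos (cos t)). apply (Rmult_eq_reg_l (exp (cos t))); lra. }
  assert (Hst : sin t = 0).
  { pose proof (SIN_bound t) as [? ?]. pose proof PI2_1.
    destruct (Rtotal_order (sin t) 0) as [Hl|[He|Hg]]; auto.
    - assert (Hq : 0 < sin (- sin t)) by (apply sin_gt_0; lra). rewrite sin_neg in Hq. lra.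
    - assert (0 < sin (sin t)) by (apply sin_gt_0; lra). lra. }
  rewrite Hst, cos_0, Rmult_1_r in HR.
  assert (Hc : cos t = 0).
  { apply exp_inv. rewrite exp_0. lra. }
  pose proof (sin2_cos2 t). rewrite Hst, Hc in H0. unfold Rsqr in H0. lra.
Qed.

Lemma sum_n_Im (f : nat -> C) N : Im (sum_n f N) = sum_n (fun j => Im (f j)) N.
Proof. induction N. rewrite !sum_O; auto. rewrite !sum_Sn, <- IHN. reflexivity. Qed.
Lemma sum_n_Re (f : nat -> C) N : Re (sum_n f N) = sum_n (fun j => Re (f j)) N.
Proof. induction N. rewrite !sum_O; auto. rewrite !sum_Sn, <- IHN. reflexivity. Qed.

Lemma Im_u_pow t k : Im (Cpow (Vt t - RtoC 1) k) = sum_n (fun j => beta k j * EI j t) k.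
Proof. rewrite cbinom, sum_n_Im. apply sum_n_ext. intros j. rewrite im_scal_l, Vt_pow. reflexivity. Qed.
Lemma Re_u_pow t k : Re (Cpow (Vt t - RtoC 1) k) = sum_n (fun j => beta k j * ER j t) k.
Proof. rewrite cbinom, sum_n_Re. apply sum_n_ext. intros j. rewrite re_scal_l, Vt_pow. reflexivity. Qed.

Definition Bt p t := Series (fun k => Im (Cpow (Vt t - RtoC 1) k) / INR (fact (k + p))).
Definition At p t := Series (fun k => Re (Cpow (Vt t - RtoC 1) k) / INR (fact (k + p))).

Lemma integrand_Im n p t : Im (thm7_integrand n p t) = exp 1 * Bt p t * sin (INR n * t).
Proof.
  unfold thm7_integrand. cbv zeta. fold (Vt t). rewrite Q by apply Vt_ne1.
  rewrite im_scal_r, im_scal_l. reflexivity.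
Qed.
Lemma integrand_Re n p t : Re (thm7_integrand n p t) = exp 1 * At p t * sin (INR n * t).
Proof.
  unfold thm7_integrand. cbv zeta. fold (Vt t). rewrite Q by apply Vt_ne1.
  rewrite re_scal_r, re_scal_l. reflexivity.
Qed.

Lemma sum_front {G : AbelianMonoid} (a : nat -> G) k :
  sum_n a (S k) = plus (a 0%nat) (sum_n (fun j => a (S j)) k).
Proof. unfold sum_n. rewrite sum_Sn_m by lia. rewrite <- sum_n_m_S. reflexivity. Qed.

Lemma rsum_le_loc (a b : nat -> R) N : (forall j, (j <= N)%nat -> a j <= b j) -> sum_n a N <= sum_n b N.
Proof. induction N; intros H. rewrite !sum_O; auto. rewrite !sum_Sn. unfold plus; simpl.
  apply Rplus_le_compat; auto. Qed.

Lemma rsum_abs (a : nat -> R) N : Rabs (sum_n a N) <= sum_n (fun j => Rabs (a j)) N.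
Proof. induction N. rewrite !sum_O; lra. rewrite !sum_Sn. unfold plus; simpl.
  eapply Rle_trans. apply Rabs_triang. lra. Qed.

Lemma rsum_scal (c : R) (a : nat -> R) N : sum_n (fun j => c * a j) N = c * sum_n a N.
Proof. induction N. rewrite !sum_O; auto. rewrite !sum_Sn, IHN. unfold plus; simpl. ring. Qed.

Lemma rsum_plus (a b : nat -> R) N : sum_n (fun j => a j + b j) N = sum_n a N + sum_n b N.
Proof. induction N. rewrite !sum_O; auto. rewrite !sum_Sn, IHN. unfold plus; simpl. ring. Qed.

Lemma beta_abs_sum k : sum_n (fun j => Rabs (beta k j)) k <= 2 ^ k.
Proof.
  induction k.
  - rewrite sum_O. simpl. rewrite Rabs_R1. lra.
  - eapply Rle_trans. apply (rsum_le_loc _ (fun j => Rabs (match j with O => 0 | S j' => beta k j' end) + Rabs (beta k j))).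
    { intros j _. simpl beta. unfold Rminus. eapply Rle_trans. apply Rabs_triang. rewrite Rabs_Ropp. lra. }
    rewrite rsum_plus. rewrite sum_front, sum_Sn. unfold plus; simpl.
    rewrite (beta_big k (S k)) by lia. rewrite !Rabs_R0. lra.
Qed.

Lemma beta_sum_bound k (g : nat -> R) c :
  (forall j, (j <= k)%nat -> Rabs (g j) <= c) -> Rabs (sum_n (fun j => beta k j * g j) k) <= 2 ^ k * c.
Proof.
  intros H. eapply Rle_trans. apply rsum_abs.
  eapply Rle_trans. apply (rsum_le_loc _ (fun j => c * Rabs (beta k j))).
  { intros j Hj. rewrite Rabs_mult. rewrite Rmult_comm. apply Rmult_le_compat_r. apply Rabs_pos. auto. }
  rewrite rsum_scal. assert (0 <= c).
  { eapply Rle_trans; [apply Rabs_pos| apply (H 0%nat); lia]. }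
  rewrite Rmult_comm. apply Rmult_le_compat_r; auto. apply beta_abs_sum.
Qed.

Lemma exp_le_mono x y : x <= y -> exp x <= exp y.
Proof. intros [H|H]. left; apply exp_increasing; auto. subst; lra. Qed.

Lemma EI_bound j k t : (j <= k)%nat -> Rabs (EI j t) <= exp (INR k).
Proof.
  intros H. unfold EI. rewrite Rabs_mult, Rabs_pos_eq by (left; apply exp_pos).
  pose proof (SIN_bound (INR j * sin t)) as [? ?].
  assert (Rabs (sin (INR j * sin t)) <= 1) by (apply Rabs_le; lra).
  pose proof (exp_pos (INR j * cos t)).
  assert (exp (INR j * cos t) <= exp (INR k)).
  { apply exp_le_mono. pose proof (COS_bound t) as [? ?]. pose proof (pos_INR j).
    apply le_INR in H. nra. }
  nra.
Qed.

Lemma ER_bound j k t : (j <= k)%nat -> Rabs (ER j t) <= exp (INR k).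
Proof.
  intros H. unfold ER. rewrite Rabs_mult, Rabs_pos_eq by (left; apply exp_pos).
  pose proof (COS_bound (INR j * sin t)) as [? ?].
  assert (Rabs (cos (INR j * sin t)) <= 1) by (apply Rabs_le; lra).
  pose proof (exp_pos (INR j * cos t)).
  assert (exp (INR j * cos t) <= exp (INR k)).
  { apply exp_le_mono. pose proof (COS_bound t) as [? ?]. pose proof (pos_INR j).
    apply le_INR in H. nra. }
  nra.
Qed.

Definition Mb (k : nat) := exp 1 * ((2 * exp 1) ^ k / INR (fact k)).

Lemma Mb_ex : ex_series Mb.
Proof. apply ex_series_scal_R, exp_series_ex. Qed.

Lemma term_bound (g : nat -> R) k p s :
  Rabs s <= 1 -> Rabs (sum_n (fun j => beta k j * g j) k) <= 2 ^ k * exp (INR k) ->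
  Rabs (exp 1 * s * (sum_n (fun j => beta k j * g j) k / INR (fact (k + p)))) <= Mb k.
Proof.
  intros Hs Hg. unfold Mb. rewrite !Rabs_mult. rewrite Rabs_pos_eq by (left; apply exp_pos).
  rewrite Rmult_assoc. apply Rmult_le_compat_l. left; apply exp_pos.
  unfold Rdiv. rewrite Rabs_mult. rewrite (Rabs_pos_eq (/ _)) by (left; apply Rinv_0_lt_compat, fact_pos).
  rewrite Rpow_mult_distr. replace (exp 1 ^ k) with (exp (INR k)) by (rewrite exp_pow_INR; f_equal; ring).
  assert (Hf : / INR (fact (k + p)) <= / INR (fact k)).
  { apply Rinv_le_contravar. apply fact_pos. apply le_INR, fact_le. lia. }
  assert (0 <= / INR (fact (k + p))) by (left; apply Rinv_0_lt_compat, fact_pos).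
  assert (0 <= Rabs (sum_n (fun j => beta k j * g j) k)) by apply Rabs_pos.
  assert (0 <= 2 ^ k * exp (INR k)) by (apply Rmult_le_pos; [apply pow_le; lra| left; apply exp_pos]).
  pose proof (Rabs_pos s).
  apply Rle_trans with (1 * (2 ^ k * exp (INR k) * / INR (fact k))).
  apply Rmult_le_compat; auto. apply Rmult_le_pos; auto. apply Rmult_le_compat; auto. lra.
Qed.

Lemma sin_abs1 x : Rabs (sin x) <= 1.
Proof. pose proof (SIN_bound x) as [? ?]. apply Rabs_le; lra. Qed.

Definition Ik n p k := exp 1 / INR (fact (k + p)) * sum_n (fun j => beta k j * (PI / 2 * (INR j ^ n / INR (fact n)))) k.

Lemma Im_int n p : (1 <= n)%nat ->
  exists If, is_series (Ik n p) If /\ is_RInt (fun t => Im (thm7_integrand n p t)) 0 PI If.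
Proof.
  intros Hn.
  destruct (SW (fun k t => exp 1 * sin (INR n * t) * (Im (Cpow (Vt t - RtoC 1) k) / INR (fact (k + p))))
               (Ik n p) Mb 0 PI) as [If [H1 H2]].
  - intros k. unfold Ik.
    eapply is_RInt_ext.
    2: { apply (is_RInt_scal (V:=R_NormedModule)).
         apply (is_RInt_sum_n (fun j t => beta k j * (EI j t * sin (INR n * t)))).
         intros j. apply (is_RInt_scal (V:=R_NormedModule)). apply lemmaE; auto. }
    intros t _. rewrite Im_u_pow. unfold scal; simpl; unfold mult; simpl.
    rewrite (sum_n_ext (fun j => beta k j * (EI j t * sin (INR n * t)))
                       (fun j => sin (INR n * t) * (beta k j * EI j t))) by (intros; toR; ring).
    rewrite rsum_scal. field. apply Rgt_not_eq, fact_pos.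
  - intros k t. rewrite Im_u_pow. apply term_bound. apply sin_abs1.
    apply beta_sum_bound. intros j Hj. apply EI_bound; auto.
  - apply Mb_ex.
  - exists If. split; auto. eapply is_RInt_ext; [|exact H2].
    intros t _. rewrite integrand_Im. unfold Bt.
    rewrite <- Series_scal_l, <- Series_scal_r. apply Series_ext. intros k. ring.
Qed.

Lemma Re_int n p : exists If, is_RInt (fun t => Re (thm7_integrand n p t)) 0 PI If.
Proof.
  destruct (SW (fun k t => exp 1 * sin (INR n * t) * (Re (Cpow (Vt t - RtoC 1) k) / INR (fact (k + p))))
               (fun k => RInt (fun t => exp 1 * sin (INR n * t) * (Re (Cpow (Vt t - RtoC 1) k) / INR (fact (k + p)))) 0 PI) Mb 0 PI) as [If [H1 H2]].
  - intros k. apply (RInt_correct (V:=R_CompleteNormedModule)).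
    apply (ex_RInt_ext (V:=R_CompleteNormedModule) (fun t => scal (exp 1 / INR (fact (k + p))) (sum_n (fun j => beta k j * (ER j t * sin (INR n * t))) k))).
    { intros t _. rewrite Re_u_pow. unfold scal; simpl; unfold mult; simpl.
      rewrite (sum_n_ext (fun j => beta k j * (ER j t * sin (INR n * t)))
                       (fun j => sin (INR n * t) * (beta k j * ER j t))) by (intros; toR; ring).
      rewrite rsum_scal. field. apply Rgt_not_eq, fact_pos. }
    apply (ex_RInt_scal (V:=R_NormedModule)).
    exists (sum_n (fun j => RInt (fun t => beta k j * (ER j t * sin (INR n * t))) 0 PI) k).
    apply (is_RInt_sum_n (fun j t => beta k j * (ER j t * sin (INR n * t)))).
    intros j. apply (RInt_correct (V:=R_CompleteNormedModule)).
    apply ex_RInt_continuous. intros z _.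
    apply (ex_derive_continuous (K:=R_AbsRing) (V:=R_NormedModule)). unfold ER. auto_derive. auto.
  - intros k t. rewrite Re_u_pow. apply term_bound. apply sin_abs1.
    apply beta_sum_bound. intros j Hj. apply ER_bound; auto.
  - apply Mb_ex.
  - exists If. eapply is_RInt_ext; [|exact H2].
    intros t _. rewrite integrand_Re. unfold At.
    rewrite <- Series_scal_l, <- Series_scal_r. apply Series_ext. intros k. ring.
Qed.

Definition phi (p m k : nat) (x : R) : R :=
  INR (fact p) / INR (fact (k + p)) * sum_n (fun j => beta k j * (INR j ^ m * exp (INR j * x))) k.
Definition hh (p m : nat) (x : R) : R := Series (fun k => phi p m k x).

Lemma INR_le_pow2 k : INR k <= 2 ^ k.
Proof. induction k. simpl; lra. rewrite S_INR. simpl.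
  assert (1 <= 2 ^ k) by (apply pow_R1_Rle; lra). lra. Qed.

Lemma An_bound p m k r : 0 < r ->
  INR (fact p) / INR (fact (k + p)) * (2 ^ k * (INR k ^ m * exp (INR k * r)))
  <= INR (fact p) * ((2 * 2 ^ m * exp r) ^ k / INR (fact k)).
Proof.
  intros Hr. unfold Rdiv. rewrite Rmult_assoc. apply Rmult_le_compat_l. apply pos_INR.
  rewrite !Rpow_mult_distr. rewrite <- exp_pow_INR.
  assert (Hkm : INR k ^ m <= (2 ^ m) ^ k).
  { rewrite <- pow_mult, Nat.mul_comm, pow_mult. apply pow_incr. split. apply pos_INR. apply INR_le_pow2. }
  assert (Hf : / INR (fact (k + p)) <= / INR (fact k)).
  { apply Rinv_le_contravar. apply fact_pos. apply le_INR, fact_le. lia. }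
  assert (0 <= / INR (fact (k + p))) by (left; apply Rinv_0_lt_compat, fact_pos).
  assert (0 <= 2 ^ k) by (apply pow_le; lra).
  assert (0 <= INR k ^ m) by (apply pow_le, pos_INR).
  assert (0 < exp r ^ k) by (apply pow_lt, exp_pos).
  apply Rle_trans with (/ INR (fact k) * (2 ^ k * ((2 ^ m) ^ k * exp r ^ k))).
  - apply Rmult_le_compat; auto. apply Rmult_le_pos; auto. apply Rmult_le_pos; lra.
    apply Rmult_le_compat_l; auto. apply Rmult_le_compat_r; lra.
  - right. ring.
Qed.

Lemma phi_bound p m k r y : 0 < r -> Rabs y <= r ->
  Rabs (phi p m k y) <= INR (fact p) / INR (fact (k + p)) * (2 ^ k * (INR k ^ m * exp (INR k * r))).
Proof.
  intros Hr Hy. unfold phi. rewrite Rabs_mult.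
  rewrite (Rabs_pos_eq (_ / _)) by (apply Rmult_le_pos; [apply pos_INR| left; apply Rinv_0_lt_compat, fact_pos]).
  apply Rmult_le_compat_l. apply Rmult_le_pos; [apply pos_INR| left; apply Rinv_0_lt_compat, fact_pos].
  apply beta_sum_bound. intros j Hj. rewrite Rabs_mult.
  rewrite Rabs_pos_eq by (apply pow_le, pos_INR). rewrite Rabs_pos_eq by (left; apply exp_pos).
  apply le_INR in Hj. pose proof (pos_INR j).
  apply Rmult_le_compat. apply pow_le, pos_INR. left; apply exp_pos.
  apply pow_incr; lra. apply exp_le_mono.
  apply Rabs_le_between in Hy. nra.
Qed.

Lemma An_ex p m r : 0 < r -> ex_series (fun k => INR (fact p) / INR (fact (k + p)) * (2 ^ k * (INR k ^ m * exp (INR k * r)))).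
Proof.
  intros Hr. apply (ex_series_bound _ (fun k => INR (fact p) * ((2 * 2 ^ m * exp r) ^ k / INR (fact k)))).
  - intros k. rewrite Rabs_pos_eq. apply An_bound; auto.
    apply Rmult_le_pos. apply Rmult_le_pos; [apply pos_INR| left; apply Rinv_0_lt_compat, fact_pos].
    apply Rmult_le_pos. apply pow_le; lra. apply Rmult_le_pos. apply pow_le, pos_INR. left; apply exp_pos.
  - apply ex_series_scal_R, exp_series_ex.
Qed.

Lemma phi_ex p m y : ex_series (fun k => phi p m k y).
Proof.
  apply (ex_series_bound _ _ (fun k => phi_bound p m k (Rabs y + 1) y ltac:(pose proof (Rabs_pos y); lra) ltac:(lra))).
  apply An_ex. pose proof (Rabs_pos y); lra.
Qed.

Lemma phi_derive p m k y : is_derive (phi p m k) y (phi p (S m) k y).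
Proof.
  unfold phi. apply is_derive_scal.
  apply (is_derive_sum_n (fun j y => beta k j * (INR j ^ m * exp (INR j * y)))).
  intros j _. auto_derive. auto. simpl. ring.
Qed.


Lemma SP_derive p m N y : derivable_pt_lim (SP (phi p m) N) y (SP (phi p (S m)) N y).
Proof.
  apply is_derive_Reals. induction N.
  - unfold SP. simpl. apply phi_derive.
  - unfold SP. simpl. apply (is_derive_plus (fun x => sum_f_R0 (fun k => phi p m k x) N)).
    apply IHN. apply phi_derive.
Qed.

Definition CVN_phi p m (r : posreal) : CVN_r (phi p m) r.
Proof.
  exists (fun k => INR (fact p) / INR (fact (k + p)) * (2 ^ k * (INR k ^ m * exp (INR k * r)))).
  exists (Series (fun k => Rabs (INR (fact p) / INR (fact (k + p)) * (2 ^ k * (INR k ^ m * exp (INR k * r)))))).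
  split.
  - apply is_series_Reals. apply Series_correct.
    apply (ex_series_bound _ _ (fun k => Req_le _ _ (Rabs_Rabsolu _))).
    eapply ex_series_ext; [|apply (An_ex p m r (cond_pos r))]. intros k.
    symmetry; apply Rabs_pos_eq.
    apply Rmult_le_pos. apply Rmult_le_pos; [apply pos_INR| left; apply Rinv_0_lt_compat, fact_pos].
    apply Rmult_le_pos. apply pow_le; lra. apply Rmult_le_pos. apply pow_le, pos_INR. left; apply exp_pos.
  - intros k y Hy. apply phi_bound. apply cond_pos. unfold Boule in Hy. rewrite Rminus_0_r in Hy. lra.
Defined.

Lemma hh_derive p m x : is_derive (hh p m) x (hh p (S m) x).
Proof.
  assert (Hr : 0 < Rabs x + 1) by (pose proof (Rabs_pos x); lra).
  set (r := mkposreal _ Hr).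
  destruct (CVN_CVU_r (phi p (S m)) r (CVN_phi p (S m) r) x) as [e He].
  { assert (pos r = Rabs x + 1) by reflexivity. lra. }
  apply is_derive_Reals.
  apply (Ranalysis5.derivable_pt_lim_CVU (SP (phi p m)) (SP (phi p (S m))) (hh p m) (hh p (S m)) x x e).
  - unfold Boule. rewrite Rminus_eq_0, Rabs_R0. apply cond_pos.
  - intros y n _. apply SP_derive.
  - intros y _. unfold SP. apply is_series_Reals. apply Series_correct, phi_ex.
  - exact He.
  - intros y Hy. apply (CVU_continuity _ _ x e He); auto.
    intros n z _. apply continuity_pt_filterlim.
    apply (ex_derive_continuous (K:=R_AbsRing) (V:=R_NormedModule)).
    eexists. apply is_derive_Reals. apply SP_derive.
Qed.

Lemma Derive_n_hh p N x : Derive_n (hh p 0) N x = hh p N x.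
Proof.
  revert x. induction N; intros x. reflexivity.
  simpl. rewrite (Derive_ext _ (hh p N)) by apply IHN.
  apply is_derive_unique. apply hh_derive.
Qed.

Lemma rbinom x k : (exp x - 1) ^ k = sum_n (fun j => beta k j * exp (INR j * x)) k.
Proof.
  pose proof (f_equal Re (cbinom (RtoC (exp x)) k)) as HH.
  rewrite <- RtoC_minus, <- RtoC_pow, re_RtoC, sum_n_Re in HH. rewrite HH.
  apply sum_n_ext. intros j. rewrite <- RtoC_pow, <- RtoC_mult, re_RtoC, exp_pow_INR. reflexivity.
Qed.

Lemma egf_hh p x : pBell_egf p x = hh p 0 x.
Proof.
  unfold pBell_egf, hh. apply Series_ext. intros k. unfold phi.
  rewrite rbinom. rewrite (sum_n_ext (fun j => beta k j * (INR j ^ 0 * exp (INR j * x)))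
     (fun j => beta k j * exp (INR j * x))) by (intros; simpl; toR; ring).
  unfold Binomial.C. replace (k + p - p)%nat with k by lia.
  pose proof (fact_pos k). pose proof (fact_pos p). pose proof (fact_pos (k + p)).
  field. repeat split; lra.
Qed.

Theorem mainTheorem7 (n p : nat) : (1 <= n)%nat ->
  pBell n p =
  2 * INR (fact n) * INR (fact p) / (PI * exp 1) *
  Im (RInt (V := C_R_CompleteNormedModule) (thm7_integrand n p) 0 PI).
Proof.
  intros Hn.
  destruct (Im_int n p Hn) as [If [HS HI]].
  destruct (Re_int n p) as [IfR HR].
  assert (HC : is_RInt (V := C_R_CompleteNormedModule) (thm7_integrand n p) 0 PI (IfR, If)).
  { exact (is_RInt_fct_extend_pair (U:=R_NormedModule) (V:=R_NormedModule) (thm7_integrand n p) 0 PI IfR If HR HI). }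
  rewrite (is_RInt_unique _ _ _ _ HC). simpl Im.
  rewrite <- (is_series_unique _ _ HS).
  unfold pBell. rewrite (Derive_n_ext _ (hh p 0)) by apply egf_hh. rewrite Derive_n_hh.
  unfold hh. rewrite <- Series_scal_l. apply Series_ext. intros k. unfold phi, Ik.
  rewrite (sum_n_ext (fun j => beta k j * (INR j ^ n * exp (INR j * 0))) (fun j => beta k j * INR j ^ n))
    by (intros; rewrite Rmult_0_r, exp_0; toR; ring).
  rewrite (sum_n_ext (fun j => beta k j * (PI / 2 * (INR j ^ n / INR (fact n))))
                     (fun j => (PI / 2 / INR (fact n)) * (beta k j * INR j ^ n)))
    by (intros; toR; field; apply Rgt_not_eq, fact_pos).
  rewrite rsum_scal.
  pose proof (fact_pos k). pose proof (fact_pos p). pose proof (fact_pos n). pose proof (fact_pos (k + p)).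
  pose proof PI_RGT_0. pose proof (exp_pos 1).
  field. repeat split; lra.
Qed.
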